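(* Let $1\le n<L$ and all rates positive. For $i\in\{1,\dots,n\}$ write $f_i(p_1,\dots,p_n,q_1,\dots,q_n)=\langle\eta_{i,1}\rangle$, the stationary density of $\Box$'s at site $(i,1)$ as a function of the rates. Then for $1\le i\le n$, $$f_i(p_2,p_3,\dots,p_n,p_1,\;q_2,q_3,\dots,q_n,q_1)=f_{i+1}(p_1,\dots,p_n,q_1,\dots,q_n),$$ i.e. $\langle\eta_{i,1}\rangle$ with $p_j\to p_{j+1}$, $q_j\to q_{j+1}$ for all $j$ (indices mod $n$) equals $\langle\eta_{i+1,1}\rangle$, where $f_{n+1}=f_1$.
   Context: Particle labels/rows are taken modulo $n$, positions/columns modulo $L$. $\Omega_{L,n}$ is the set of words $w_1\cdots w_L$ on the ring $\mathbb{Z}/L\mathbb{Z}$ over the alphabet $\{\bullet_1,\dots,\bullet_n,\Box_1,\dots,\Box_n\}$ in which each $\bullet_k$ occurs exactly once, the $\bullet_1,\dots,\bullet_n$ appear in this cyclic order, and the remaining $L-n$ letters are arbitrary $\Box_i$'s. Transitions (displayed segments are consecutive positions, rest unchanged, $C$ a possibly empty word in the $\Box$-letters): (T1) $\bullet_k\Box_i \to \Box_i\bullet_k$ at rate $p_k$, if $i\neq k$; (T2) $\bullet_{k-1}\,C\,\bullet_k\Box_k \to \bullet_{k-1}\Box_{k-1}\,C\,\bullet_k$ at rate $p_k$; (T3) $\Box_i\bullet_k \to \bullet_k\Box_i$ at rate $q_k$, if $i\neq k$; (T4) $\Box_k\bullet_k\,C\,\bullet_{k+1} \to \bullet_k\,C\,\Box_{k+1}\bullet_{k+1}$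 at rate $q_k$. $\mathcal{A}_{L,n}$ is the set of arrays with $n$ rows and $L$ columns, entries in $\{\cdot,\bullet,\Box\}$, identified with $\Omega_{L,n}$ via: column $j$ has a $\bullet$ (resp. $\Box$) in row $k$ and $\cdot$ elsewhere iff $w_j=\bullet_k$ (resp. $\Box_k$); it carries the transported dynamics, irreducible when all rates are positive. $\eta_{i,j}$ is the indicator that site (row $i$, column $j$) is occupied by a $\Box$, and $\langle\cdot\rangle$ denotes expectation under the unique stationary distribution. *)

(* Defs.v *)
From HB Require Import structures.
From mathcomp Require Import all_boot all_order all_algebra.
From mathcomp Require Import reals.
Set Implicit Arguments. Unset Strict Implicit. Unset Printing Implicit Defensive.
Import Order.TTheory GRing.Theory Num.Theory.

(* Conventions: particle labels / rows 1..n are 'I_n (0-based, label k+1 <-> k),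
   positions / columns 1..L are 'I_L (column 1 <-> 0).
   A letter is a pair (b, k) : bool * 'I_n; (true, k) = bullet_k, (false, k) = Box_k. *)

Definition letter (n : nat) := (bool * 'I_n)%type.
Definition word (n L : nat) := {ffun 'I_L -> letter n}.

Definition cdist (L : nat) (a b : 'I_L) : nat := ((b + L - a) %% L)%N.

(* The set Omega_{L,n}: each bullet_k occurs exactly once, and going forward
   around the ring from any bullet, the next bullet met carries the next label. *)
Definition valid (n L : nat) (w : word n L) : bool :=
  [forall k : 'I_n, #|[set j | w j == (true, k)]| == 1%N] &&
  [forall j : 'I_L, forall j2 : 'I_L,
     [&& (w j).1, (w j2).1, j != j2 &
        [forall x : 'I_L, ((0 < cdist j x) && (cdist j x < cdist j j2))%N ==> ~~ (w x).1]]
     ==> ((w j2).2 == ordS (w j).2)].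

Definition Omega (n L : nat) : {set word n L} := [set w | valid w].

Definition swapw (n L : nat) (w : word n L) (a b : 'I_L) : word n L :=
  [ffun x => if x == a then w b else if x == b then w a else w x].

(* (T2) bullet_{k-1} C bullet_k Box_k -> bullet_{k-1} Box_{k-1} C bullet_k,
   bullet_k at position j.  m = position of bullet_{k-1}; dd x in 1..L is the
   forward distance from m to x (with dd m = L); the affected block is the set
   of x with 1 <= dd x <= dd j, i.e. positions m+1 .. j, plus position j+1. *)
Definition T2res (n L : nat) (w : word n L) (j : 'I_L) : word n L :=
  let k := (w j).2 in
  let m := odflt j [pick m : 'I_L | w m == (true, ord_pred k)] in
  let dd := fun x : 'I_L => ((x + L - m - 1) %% L).+1 in
  [ffun x => if x == ordS j then (true, k)
             else if (dd x <= dd j)%N then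
               (if dd x == 1%N then (false, ord_pred k) else w (ord_pred x))
             else w x].

(* (T4) Box_k bullet_k C bullet_{k+1} -> bullet_k C Box_{k+1} bullet_{k+1},
   bullet_k at position j.  M = position of bullet_{k+1}; dd x in 1..L is the
   backward distance from M to x (dd M = L); block = positions j .. M-1, plus j-1. *)
Definition T4res (n L : nat) (w : word n L) (j : 'I_L) : word n L :=
  let k := (w j).2 in
  let M := odflt j [pick m : 'I_L | w m == (true, ordS k)] in
  let dd := fun x : 'I_L => ((M + L - x - 1) %% L).+1 in
  [ffun x => if x == ord_pred j then (true, k)
             else if (dd x <= dd j)%N then
               (if dd x == 1%N then (false, ordS k) else w (ordS x))
             else w x].

(* forward jump of the bullet at j (rules T1 / T2, rate p_k) *)
Definition fwd (n L : nat) (w : word n L) (j : 'I_L) : option (word n L) :=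
  if (w j).1 then
    let k := (w j).2 in
    let c := w (ordS j) in
    if c.1 then None
    else Some (if c.2 == k then T2res w j else swapw w j (ordS j))
  else None.

(* backward jump of the bullet at j (rules T3 / T4, rate q_k) *)
Definition bwd (n L : nat) (w : word n L) (j : 'I_L) : option (word n L) :=
  if (w j).1 then
    let k := (w j).2 in
    let c := w (ord_pred j) in
    if c.1 then None
    else Some (if c.2 == k then T4res w j else swapw w j (ord_pred j))
  else None.

Local Open Scope ring_scope.

Definition rate (R : realType) (n L : nat) (p q : 'I_n -> R) (w w' : word n L) : R :=
  \sum_(j : 'I_L)
     ((if fwd w j is Some v then (v == w')%:R * p (w j).2 else 0) +
      (if bwd w j is Some v then (v == w')%:R * q (w j).2 else 0)).

Definition stationary (R : realType) (n L : nat) (p q : 'I_n -> R)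
    (pi : word n L -> R) : Prop :=
  [/\ forall w, w \notin Omega n L -> pi w = 0,
      forall w, 0 <= pi w,
      \sum_(w in Omega n L) pi w = 1 &
      forall w', w' \in Omega n L ->
        \sum_(w in Omega n L) pi w * rate p q w w' =
        pi w' * \sum_(w'' in Omega n L) rate p q w' w''].

(* <eta_{i,c}> : probability that site (row i, column c) holds a Box *)
Definition density (R : realType) (n L : nat) (pi : word n L -> R)
    (c : 'I_L) (i : 'I_n) : R :=
  \sum_(w in Omega n L) pi w * (w c == (false, i))%:R.

(* Main.v *)
Require Import Defs.
From HB Require Import structures.
From mathcomp Require Import all_boot all_order all_algebra.
From mathcomp Require Import reals.
From mathcomp Require Import zify.
Set Implicit Arguments. Unset Strict Implicit. Unset Printing Implicit Defensive.

Lemma val_ordS L (x : 'I_L) : (ordS x : nat) = if x.+1 == L then 0%N else x.+1.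
Proof.
rewrite /ordS /=; have := ltn_ord x; case: eqP => [->|h] hx; first by rewrite modnn.
by rewrite modn_small //; lia.
Qed.

Lemma val_ord_pred L (x : 'I_L) : (ord_pred x : nat) = if x == 0 :> nat then L.-1 else x.-1.
Proof.
rewrite /ord_pred /=; have := ltn_ord x; case: eqP => [->|h] hx.
  by rewrite add0n modn_small //; lia.
have -> : (x + L).-1 = x.-1 + L by lia.
by rewrite modnDr modn_small //; lia.
Qed.

Lemma cdistE L (a b : 'I_L) : cdist a b = if (a <= b)%N then (b - a)%N else (b + L - a)%N.
Proof.
rewrite /cdist; have := ltn_ord a; have := ltn_ord b; case: (leqP a b) => h hb ha.
  have -> : (b + L - a = (b - a) + L)%N by lia.
  by rewrite modnDr modn_small //; lia.
by rewrite modn_small //; lia.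
Qed.

Lemma ordP L (x y : 'I_L) : (x = y) <-> (x = y :> nat).
Proof. by split => [->|/val_inj]. Qed.

Ltac ordnat := rewrite ?ordP ?val_ordS ?val_ord_pred ?cdistE in *.

Ltac splitifs := repeat (match goal with
  | |- context[if ?b then _ else _] => case: (boolP b)
  | H : context[if ?b then _ else _] |- _ => move: H; case: (boolP b)
  end; intros).

Ltac ordlia := ordnat; splitifs; try (move=> /eqP); lia.

Lemma eq_ordE L (x y : 'I_L) : (x == y) = (nat_of_ord x == nat_of_ord y).
Proof. by []. Qed.

Ltac ordnat2 :=
  repeat match goal with H : ?T |- _ => lazymatch type of T with Prop => revert H end end;
  rewrite ?cdistE ?eq_ordE ?ordP ?val_ordS ?val_ord_pred; intros.
Ltac ordlia2 := ordnat2; splitifs; lia.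

Definition ddf L (M x : 'I_L) := ((M + L - x - 1) %% L).+1.

Lemma ddfE L (M x : 'I_L) : ddf M x = if x == M then L else cdist x M.
Proof.
rewrite /ddf; have := ltn_ord M; have := ltn_ord x => hx hM.
case: (ltnP x M) => h.
  have -> : (M + L - x - 1 = (M - x - 1) + L)%N by lia.
  rewrite modnDr modn_small; last lia. ordlia2.
rewrite modn_small; last lia. ordlia2.
Qed.

Lemma cdist_pred L (x j : 'I_L) : x != j -> (cdist x (ord_pred j)).+1 = cdist x j.
Proof. move: (ltn_ord x) (ltn_ord j) => ? ?. ordlia2. Qed.
Lemma cdist_S L (x z : 'I_L) : z != x -> cdist x z = (cdist (ordS x) z).+1.
Proof. move: (ltn_ord x) (ltn_ord z) => ? ?. ordlia2. Qed.
Lemma cdist_inj L (x y z : 'I_L) : cdist x y = cdist x z -> y = z.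
Proof. move: (ltn_ord x) (ltn_ord z) (ltn_ord y) => ? ? ?. ordlia2. Qed.
Lemma cdist_lt L (x y : 'I_L) : (cdist x y < L)%N.
Proof. move: (ltn_ord x) (ltn_ord y) => ? ?. ordlia2. Qed.
Lemma cdist0 L (x : 'I_L) : cdist x x = 0%N.
Proof. move: (ltn_ord x) => ?. ordlia2. Qed.
Lemma cdist_eq0 L (x y : 'I_L) : cdist x y = 0%N -> x = y.
Proof. move: (ltn_ord x) (ltn_ord y) => ? ?. ordlia2. Qed.
Lemma cdist_tri L (j x M : 'I_L) : (cdist j x < cdist j M)%N -> (cdist j x + cdist x M)%N = cdist j M.
Proof. move: (ltn_ord x) (ltn_ord j) (ltn_ord M) => ? ? ?. ordlia2. Qed.
Lemma cdist_add L (j x z : 'I_L) : (cdist j x + cdist x z < L)%N -> cdist j z = (cdist j x + cdist x z)%N.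
Proof. move: (ltn_ord x) (ltn_ord j) (ltn_ord z) => ? ? ?. ordlia2. Qed.
Lemma ordS_neq L (x : 'I_L) : (1 < L)%N -> ordS x != x.
Proof. move: (ltn_ord x) => ? ?. ordlia2. Qed.
Lemma cdist_Sself L (x : 'I_L) : cdist (ordS x) x = L.-1.
Proof. move: (ltn_ord x) => ?. ordlia2. Qed.
Lemma pred_neq L (x : 'I_L) : (1 < L)%N -> ord_pred x != x.
Proof. move: (ltn_ord x) => ? ?. ordlia2. Qed.
Lemma ddf_le L (M j x : 'I_L) : M != j -> (ddf M x <= ddf M j)%N = (cdist j x < cdist j M)%N.
Proof. move: (ltn_ord x) (ltn_ord j) (ltn_ord M) => ? ? ? ?. rewrite !ddfE. ordlia2. Qed.
Lemma ddf_1 L (M x : 'I_L) : (ddf M x == 1%N) = (ordS x == M).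
Proof. move: (ltn_ord x) (ltn_ord M) => ? ?. rewrite !ddfE. ordlia2. Qed.
Lemma cdist_jpred L (j : 'I_L) : (1 < L)%N -> cdist j (ord_pred j) = L.-1.
Proof. move: (ltn_ord j) => ? ?. ordlia2. Qed.
Lemma cdist_jS L (j x : 'I_L) : ((cdist j x).+1 < L)%N -> cdist j (ordS x) = (cdist j x).+1.
Proof. move: (ltn_ord j) (ltn_ord x) => ? ? ?. ordlia2. Qed.

Definition nbb n L (w : word n L) (x : 'I_L) (i : 'I_n) : bool :=
  [exists y, (w y == (true, i)) && [forall z, (cdist x z < cdist x y)%N ==> ~~ (w z).1]].

Lemma nbbP n L (w : word n L) x i :
  reflect (exists y, w y = (true, i) /\ forall z, (cdist x z < cdist x y)%N -> ~~ (w z).1)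
          (nbb w x i).
Proof.
apply: (iffP existsP) => [[y /andP[/eqP hy /forallP hz]]|[y [hy hz]]].
  by exists y; split => // z; apply/implyP/hz.
by exists y; rewrite hy eqxx /=; apply/forallP => z; apply/implyP/hz.
Qed.

Lemma nbb_uniq n L (w : word n L) x i i' : nbb w x i -> nbb w x i' -> i = i'.
Proof.
move=> /nbbP[y [hy hz]] /nbbP[y' [hy' hz']].
have h1 : ~ (cdist x y' < cdist x y)%N by move/hz; rewrite hy'.
have h2 : ~ (cdist x y < cdist x y')%N by move/hz'; rewrite hy.
have e : cdist x y = cdist x y' by lia.
by move: hy; rewrite (cdist_inj e) hy' => -[].
Qed.

Lemma nbb_bul n L (w : word n L) x i : w x = (true, i) -> nbb w x i.
Proof. by move=> hx; apply/nbbP; exists x; split => // z; rewrite cdist0. Qed.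

Lemma nbb_box n L (w : word n L) x i : ~~ (w x).1 -> nbb w x i = nbb w (ordS x) i.
Proof.
move=> hx; apply/idP/idP => /nbbP[y [hy hz]]; apply/nbbP; exists y; split => // z hzl.
- have yx : y != x by apply/eqP => e; move: hx; rewrite -e hy.
  case: (eqVneq z x) => [->//|zx]; apply: hz.
  by rewrite (cdist_S zx) (cdist_S yx).
- have yx : y != x by apply/eqP => e; move: hx; rewrite -e hy.
  case: (eqVneq z x) => [->//|zx]; apply: hz.
  by move: hzl; rewrite (cdist_S zx) (cdist_S yx).
Qed.

Lemma nbb_ex n L (w : word n L) x : (exists y, (w y).1) -> exists i, nbb w x i.
Proof.
move=> [y0 hy0].
case: (@arg_minnP _ y0 (fun y => (w y).1) (fun y => cdist x y) hy0) => y hy hmin.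
exists (w y).2; apply/nbbP; exists y; split.
  by move: hy; case: (w y) => [[] k].
move=> z hz; apply/negP => hzb; have := hmin z hzb; lia.
Qed.

Lemma valid_cnt n L (w : word n L) k : valid w -> #|[set j | w j == (true, k)]| = 1%N.
Proof. by case/andP => /forallP /(_ k) /eqP. Qed.

Lemma valid_ord n L (w : word n L) j j2 : valid w -> (w j).1 -> (w j2).1 -> j != j2 ->
  (forall x, (0 < cdist j x)%N -> (cdist j x < cdist j j2)%N -> ~~ (w x).1) ->
  (w j2).2 = ordS (w j).2.
Proof.
case/andP => _ /forallP /(_ j) /forallP /(_ j2) h h1 h2 h3 h4; apply/eqP; apply: (implyP h).
rewrite h1 h2 h3 /=; apply/forallP => x; apply/implyP => /andP[a b]; exact: h4.
Qed.

Lemma pos_uniq n L (w : word n L) x y i : valid w -> w x = (true, i) -> w y = (true, i) -> x = y.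
Proof.
move=> /(valid_cnt i) /eqP /cards1P [a ha] hx hy.
have : x \in [set j | w j == (true, i)] by rewrite inE hx.
have : y \in [set j | w j == (true, i)] by rewrite inE hy.
by rewrite ha !inE => /eqP -> /eqP ->.
Qed.

Lemma pos_ex n L (w : word n L) i : valid w -> exists x, w x = (true, i).
Proof.
move=> /(valid_cnt i) /eqP /cards1P [a ha].
have : a \in [set j | w j == (true, i)] by rewrite ha inE.
by rewrite inE => /eqP h; exists a.
Qed.

Lemma cdist_Sx_lt L (x z : 'I_L) : z != x -> (cdist (ordS x) z < L.-1)%N.
Proof.
move=> zx; have := cdist_lt x z; rewrite (cdist_S zx).
have : cdist x z != 0%N by apply/eqP => /cdist_eq0 e; move: zx; rewrite e eqxx.
rewrite (cdist_S zx); lia.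
Qed.

Lemma valid_succ n L (w : word n L) x i : (1 < L)%N -> valid w -> w x = (true, i) ->
  nbb w (ordS x) (ordS i).
Proof.
move=> hL hv hx.
have [i' hi'] := nbb_ex (ordS x) (ex_intro _ x (introT idP (f_equal fst hx))).
move: (hi') => /nbbP [y [hy hz]].
case: (eqVneq y x) => [e|yx].
  subst y; have ei : i' = i by move: hy; rewrite hx => -[].
  subst i'; have [x' hx'] := pos_ex (ordS i) hv.
  case: (eqVneq x' x) => [e|x'x].
    by move: hx'; rewrite e hx => -[<-].
  have := hz x'; rewrite hx' /= cdist_Sself => /(_ (cdist_Sx_lt x'x)) //.
suff <- : i' = ordS i by [].
have := valid_ord hv (introT idP (f_equal fst hx)) (introT idP (f_equal fst hy)) _ _.
rewrite hx hy /= => -> //; first by rewrite eq_sym.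
move=> z z0 zl; apply: hz.
have zx : z != x by apply/eqP => e; move: z0; rewrite e cdist0.
by move: zl; rewrite (cdist_S zx) (cdist_S yx).
Qed.

Lemma bulE n L (w : word n L) x : (w x).1 -> w x = (true, (w x).2).
Proof. by case: (w x) => [[] k]. Qed.

Lemma valid_of n L (w : word n L) : (1 < L)%N ->
  (forall k, #|[set j | w j == (true, k)]| = 1%N) ->
  (forall x i, w x = (true, i) -> nbb w (ordS x) (ordS i)) -> valid w.
Proof.
move=> hL hc hs; apply/andP; split; first by apply/forallP => k; rewrite hc.
apply/forallP => j; apply/forallP => j2; apply/implyP => /and4P[h1 h2 h3 /forallP h4].
have := hs _ _ (bulE h1) => hA.
have hB : nbb w (ordS j) (w j2).2.
  apply/nbbP; exists j2; split; first exact: bulE.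
  move=> z hz; case: (eqVneq z j) => [e|zj].
    have := @cdist_Sx_lt _ j j2; rewrite eq_sym h3 => /(_ isT).
    by move: hz; rewrite e cdist_Sself; lia.
  have j2j : j2 != j by rewrite eq_sym.
  by have := h4 z; rewrite (cdist_S zj) (cdist_S j2j) !ltnS hz leq0n.
by rewrite (nbb_uniq hB hA).
Qed.

Definition sameskel n L (w1 w2 : word n L) := forall x, (w1 x).1 || (w2 x).1 -> w1 x = w2 x.

Lemma sk_fst n L (w1 w2 : word n L) x : sameskel w1 w2 -> (w1 x).1 = (w2 x).1.
Proof.
move=> h; case: (boolP ((w1 x).1 || (w2 x).1)) => [/h -> //|].
by rewrite negb_or => /andP[/negPf -> /negPf ->].
Qed.

Lemma sk_sym n L (w1 w2 : word n L) : sameskel w1 w2 -> sameskel w2 w1.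
Proof. by move=> h x hx; rewrite h // orbC. Qed.

Lemma sk_eqb n L (w1 w2 : word n L) x i : sameskel w1 w2 -> (w1 x == (true, i)) = (w2 x == (true, i)).
Proof.
move=> h; case: (boolP (w1 x).1) => b; first by rewrite h ?b.
have b2 : ~~ (w2 x).1 by rewrite -(sk_fst x h).
by move: b b2; case: (w1 x) => [[] ?]; case: (w2 x) => [[] ?].
Qed.

Lemma sk_nbb_imp n L (w1 w2 : word n L) x i : sameskel w1 w2 -> nbb w1 x i -> nbb w2 x i.
Proof.
move=> h /nbbP[y [hy hz]]; apply/nbbP; exists y; split.
  by rewrite -h // hy.
by move=> z /hz; rewrite (sk_fst z h).
Qed.

Lemma sk_nbb n L (w1 w2 : word n L) x i : sameskel w1 w2 -> nbb w1 x i = nbb w2 x i.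
Proof. by move=> h; apply/idP/idP; apply: sk_nbb_imp => //; apply: sk_sym. Qed.

Lemma sk_valid n L (w1 w2 : word n L) : (1 < L)%N -> sameskel w1 w2 -> valid w1 -> valid w2.
Proof.
move=> hL h hv; apply: valid_of => // [k|x i hx].
  by rewrite -(valid_cnt k hv); apply: eq_card => x; rewrite !inE (sk_eqb _ _ h).
rewrite -(sk_nbb _ _ h); apply: valid_succ => //.
by rewrite h // hx orbT.
Qed.

Definition tau L (a b x : 'I_L) := if x == a then b else if x == b then a else x.

Lemma tauK L (a b : 'I_L) : involutive (tau a b).
Proof.
move=> x; rewrite /tau; case: (eqVneq x a) => [->|xa]; first by rewrite eqxx; case: eqVneq.
case: (eqVneq x b) => [->|xb]; first by rewrite eqxx.
by rewrite (negPf xa) (negPf xb).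
Qed.

Lemma swapwE n L (w : word n L) a b x : swapw w a b x = w (tau a b x).
Proof. by rewrite /swapw ffunE /tau; case: eqP => //; case: eqP. Qed.

Lemma swap_cnt n L (w : word n L) a b t :
  #|[set x | swapw w a b x == t]| = #|[set x | w x == t]|.
Proof.
transitivity #|tau a b @^-1: [set x | w x == t]|; last exact: card_preimset (inv_inj (tauK a b)).
by apply: eq_card => x; rewrite !inE swapwE.
Qed.

Lemma swap_a n L (w : word n L) a b : swapw w a b a = w b.
Proof. by rewrite swapwE /tau eqxx. Qed.
Lemma swap_b n L (w : word n L) a b : swapw w a b b = w a.
Proof. by rewrite swapwE /tau eqxx; case: eqP => // ->. Qed.
Lemma swap_o n L (w : word n L) a b x : x != a -> x != b -> swapw w a b x = w x.
Proof. by move=> /negPf xa /negPf xb; rewrite swapwE /tau xa xb. Qed.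

Lemma np_imp n L (w : word n L) j k x i : (1 < L)%N -> w j = (true, k) -> ~~ (w (ord_pred j)).1 ->
  x != j -> x != ord_pred j -> nbb w x i -> nbb (swapw w j (ord_pred j)) x i.
Proof.
move=> hL hj hb xj xj' /nbbP[y [hy hz]]; apply/nbbP.
have hcp := cdist_pred xj.
have jj' : ord_pred j != j := pred_neq j hL.
case: (eqVneq y j) => [ey|yj].
- subst y; exists (ord_pred j); split; first by rewrite swap_b -hy.
  move=> z hzl.
  have zj' : z != ord_pred j by apply/eqP => e; move: hzl; rewrite e ltnn.
  have zj : z != j by apply/eqP => e; move: hzl; rewrite e; lia.
  by rewrite swap_o //; apply: hz; lia.
- have yj' : y != ord_pred j by apply/eqP => e; move: hb; rewrite -e hy.
  exists y; split; first by rewrite swap_o.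
  move=> z hzl.
  case: (eqVneq z j) => [e|zj]; first by move: (hz z hzl); rewrite e hj.
  case: (eqVneq z (ord_pred j)) => [e|zj'].
    exfalso; subst z.
    have : (cdist x j <= cdist x y)%N by lia.
    rewrite leq_eqVlt => /orP[/eqP/cdist_inj e|/hz]; first by move: yj; rewrite e eqxx.
    by rewrite hj.
  by rewrite swap_o //; apply: hz.
Qed.

Lemma np n L (w : word n L) j k x i : (1 < L)%N -> w j = (true, k) -> ~~ (w (ord_pred j)).1 ->
  x != j -> x != ord_pred j -> nbb (swapw w j (ord_pred j)) x i = nbb w x i.
Proof.
move=> hL hj hb xj xj'; apply/idP/idP; last exact: (np_imp hL hj hb xj xj').
move=> h1; have hjb : (w j).1 by rewrite hj.
have [i0 h0] := nbb_ex x (ex_intro (fun y => (w y).1) j hjb).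
by rewrite (nbb_uniq h1 (np_imp hL hj hb xj xj' h0)).
Qed.

Lemma valid_swap n L (w : word n L) j k : (1 < L)%N -> valid w -> w j = (true, k) ->
  ~~ (w (ord_pred j)).1 -> valid (swapw w j (ord_pred j)).
Proof.
move=> hL hv hj hb; apply: valid_of => // [k0|x i hx].
  by rewrite swap_cnt; apply: valid_cnt.
have Sj' : ordS (ord_pred j) = j := ord_predK j.
have jj' : ord_pred j != j := pred_neq j hL.
have hj' : nbb w (ord_pred j) k.
  by rewrite (nbb_box _ hb) Sj'; apply: nbb_bul.
case: (eqVneq x j) => [e|xj]; first by move: hx hb; rewrite e swap_a => ->.
case: (eqVneq x (ord_pred j)) => [e|xj'].
  subst x; move: hx; rewrite swap_b hj => -[<-].
  rewrite Sj' nbb_box; last by rewrite swap_a.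
  have hs := valid_succ hL hv hj.
  case: (eqVneq (ordS j) (ord_pred j)) => [e|e2].
    have : nbb w (ord_pred j) (ordS k) by rewrite -e.
    move/(nbb_uniq hj') => <-.
    by rewrite e; apply: nbb_bul; rewrite swap_b.
  by rewrite (np _ hL hj hb) //; apply: ordS_neq.
have hx' : w x = (true, i) by rewrite -hx swap_o.
have hs := valid_succ hL hv hx'.
case: (eqVneq (ordS x) j) => [e|e1].
  by move: xj'; rewrite -Sj' in e; rewrite (ordS_inj e) eqxx.
case: (eqVneq (ordS x) (ord_pred j)) => [e|e2]; last by rewrite (np _ hL hj hb).
have : nbb w (ord_pred j) (ordS i) by rewrite -e.
move/(nbb_uniq hj') => <-.
by rewrite e; apply: nbb_bul; rewrite swap_b.
Qed.

Lemma pick_pos n L (w : word n L) j M t : valid w -> w M = (true, t) ->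
  odflt j [pick m | w m == (true, t)] = M.
Proof.
move=> hv hM; case: pickP => [m /eqP hm|h] /=; first exact: pos_uniq hm hM.
by move: (h M); rewrite hM eqxx.
Qed.

Lemma T4E n L (w : word n L) j k M x : valid w -> w j = (true, k) -> w M = (true, ordS k) ->
  T4res w j x = if x == ord_pred j then (true, k)
                else if (ddf M x <= ddf M j)%N then
                  (if ddf M x == 1%N then (false, ordS k) else w (ordS x))
                else w x.
Proof. by move=> hv hj hM; rewrite /T4res ffunE hj /= (pick_pos j hv hM). Qed.

Lemma V_next n L (w : word n L) j k M y : (1 < L)%N -> valid w -> w j = (true, k) ->
  w M = (true, ordS k) -> (0 < cdist j y)%N -> (cdist j y < cdist j M)%N ->
  ~~ (w y).1 /\ nbb w y (ordS k).
Proof.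
move=> hL hv hj hM.
have hs := valid_succ hL hv hj.
move: (hs) => /nbbP[y0 [hy0 hz0]].
have e0 : y0 = M := pos_uniq hv hy0 hM. subst y0.
have box : forall y, (0 < cdist j y)%N -> (cdist j y < cdist j M)%N -> ~~ (w y).1.
  move=> y1 h1 h2.
  have y1j : y1 != j by apply/eqP => e; move: h1; rewrite e cdist0.
  have Mj : M != j by apply/eqP => e; move: h2; rewrite e cdist0.
  by apply: hz0; move: h2; rewrite (cdist_S y1j) (cdist_S Mj).
move=> h1 h2; split; first exact: box.
apply/nbbP; exists M; split => // z hz.
have ht := cdist_tri h2.
have hadd : cdist j z = (cdist j y + cdist y z)%N.
  by apply: cdist_add; have := cdist_lt j M; lia.
by apply: box; lia.
Qed.

Lemma ws_I n L (w : word n L) j k M x : (1 < L)%N -> valid w -> w j = (true, k) ->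
  w M = (true, ordS k) -> M != j -> ~~ (w (ord_pred j)).1 ->
  (cdist j x < cdist j M)%N -> nbb (swapw w j (ord_pred j)) x (ordS k).
Proof.
move=> hL hv hj hM Mj hb hx.
have Mj' : M != ord_pred j by apply/eqP => e; move: hb; rewrite -e hM.
apply/nbbP; exists M; split; first by rewrite swap_o.
move=> z hz.
have ht := cdist_tri hx.
have hadd : cdist j z = (cdist j x + cdist x z)%N.
  by apply: cdist_add; have := cdist_lt j M; lia.
case: (eqVneq z j) => [->|zj]; first by rewrite swap_a.
have z0 : (0 < cdist j z)%N by case: (posnP (cdist j z)) => // /cdist_eq0 e; move: zj; rewrite -e eqxx.
have zl : (cdist j z < cdist j M)%N by lia.
have zj' : z != ord_pred j.
  by apply/eqP => e; move: zl; rewrite e cdist_jpred //; have := cdist_lt j M; lia.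
by rewrite swap_o //; case: (V_next hL hv hj hM z0 zl).
Qed.

Lemma ws_eqb n L (w : word n L) j k i x : (1 < L)%N -> w j = (true, k) -> ~~ (w (ord_pred j)).1 ->
  i != k -> (swapw w j (ord_pred j) x == (true, i)) = (w x == (true, i)).
Proof.
move=> hL hj hb ik.
have bf : forall t : letter n, ~~ t.1 -> (t == (true, i)) = false by move=> [[] ?].
have kf : ((true, k) == (true, i)) = false by rewrite xpair_eqE /= eq_sym (negPf ik).
case: (eqVneq x j) => [->|xj]; first by rewrite swap_a hj (bf _ hb) kf.
case: (eqVneq x (ord_pred j)) => [->|xj']; last by rewrite swap_o.
by rewrite swap_b hj (bf _ hb) kf.
Qed.

Lemma move_core n L (w : word n L) j k l : (1 < n)%N -> (n < L)%N -> valid w ->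
  w j = (true, k) -> w (ord_pred j) = (false, l) ->
  exists w', [/\ bwd w j = Some w', sameskel (swapw w j (ord_pred j)) w' &
    exists M : 'I_L, (0 < cdist j M)%N /\ forall x, ~~ (w' x).1 ->
      if (cdist j x < cdist j M)%N then
        nbb w' x (ordS k) /\
        ((exists y, [/\ ~~ (w y).1, nbb w y (ordS k) & w' x = w y]) \/
          w' x = (false, if l == k then ordS k else l))
      else w' x = w x /\ forall i, nbb w' x i = nbb w x i].
Proof.
move=> hn hnL hv hj hw'.
have hL : (1 < L)%N by lia.
have hb : ~~ (w (ord_pred j)).1 by rewrite hw'.
have [M hM] := pos_ex (ordS k) hv.
have Mj : M != j.
  by apply/eqP => e; move: hM; rewrite e hj => -[] /eqP; rewrite eq_sym (negPf (ordS_neq k hn)).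
have M0 : (0 < cdist j M)%N.
  by case: (posnP (cdist j M)) => // /cdist_eq0 e; move: Mj; rewrite e eqxx.
have Mj' : M != ord_pred j by apply/eqP => e; move: hb; rewrite -e hM.
have j'I : ~~ (cdist j (ord_pred j) < cdist j M)%N.
  by rewrite cdist_jpred // -leqNgt; have := cdist_lt j M; lia.
have jI : (cdist j j < cdist j M)%N by rewrite cdist0.
have ne0 : forall x, x != j -> (0 < cdist j x)%N.
  by move=> x xj; case: (posnP (cdist j x)) => // /cdist_eq0 e; move: xj; rewrite e eqxx.
case: (eqVneq l k) => [elk|lk].
-
  subst l.
  have T4x : forall x, T4res w j x = if x == ord_pred j then (true, k)
      else if (cdist j x < cdist j M)%N then
        (if ordS x == M then (false, ordS k) else w (ordS x)) else w x.
    by move=> x; rewrite (T4E _ hv hj hM) ddf_le // ddf_1.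
  have inner : forall x, (cdist j x < cdist j M)%N -> ordS x != M ->
      [/\ (0 < cdist j (ordS x))%N, (cdist j (ordS x) < cdist j M)%N,
          ~~ (w (ordS x)).1 & nbb w (ordS x) (ordS k)].
    move=> x xI SM.
    have h1 : ((cdist j x).+1 < L)%N by have := cdist_lt j M; lia.
    have h2 : (cdist j (ordS x) < cdist j M)%N.
      rewrite cdist_jS //; rewrite ltn_neqAle; apply/andP; split; last by [].
      by apply/eqP => e; move: SM; rewrite -(cdist_jS h1) in e; rewrite (cdist_inj e) eqxx.
    have h0 : (0 < cdist j (ordS x))%N by rewrite cdist_jS.
    by case: (V_next hL hv hj hM h0 h2).
  have sk : sameskel (swapw w j (ord_pred j)) (T4res w j).
    move=> x; rewrite T4x.
    case: (eqVneq x (ord_pred j)) => [->|xj']; first by rewrite swap_b hj.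
    case: ifP => xI; last by rewrite swap_o //; apply/eqP => e; move: xI; rewrite e jI.
    have wsb : ~~ (swapw w j (ord_pred j) x).1.
      case: (eqVneq x j) => [->|xj]; first by rewrite swap_a.
      by rewrite swap_o //; case: (V_next hL hv hj hM (ne0 x xj) xI).
    rewrite (negPf wsb) /=; case: ifP => // /negbT SM.
    by case: (inner x xI SM) => _ _ /negPf ->.
  exists (T4res w j); split => //.
  + by rewrite /bwd hj hw' /= eqxx.
  + exists M; split => // x hbx.
    case: ifP => xI.
    * split; first by rewrite -(sk_nbb _ _ sk); exact: (ws_I hL hv hj hM Mj hb xI).
      rewrite T4x; case: (eqVneq x (ord_pred j)) => [e|xj'].
        by move: xI; rewrite e (negPf j'I).
      rewrite xI; case: ifP => SM; [right|left] => //.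
      by exists (ordS x); case: (inner x xI (negbT SM)).
    * have xj : x != j by apply/eqP => e; move: xI; rewrite e jI.
      have xj' : x != ord_pred j by apply/eqP => e; move: hbx; rewrite e T4x eqxx.
      have ->: T4res w j x = w x by rewrite T4x (negPf xj') xI.
      split => // i.
      by rewrite -(sk_nbb _ _ sk) (np _ hL hj hb).
-
  exists (swapw w j (ord_pred j)); split => //.
  + by rewrite /bwd hj hw' /= (negPf lk).
  + exists M; split => // x hbx.
    case: ifP => xI.
    * split; first exact: (ws_I hL hv hj hM Mj hb xI).
      case: (eqVneq x j) => [->|xj]; first by right; rewrite swap_a hw'.
      have xj' : x != ord_pred j by apply/eqP => e; move: hbx; rewrite e swap_b hj.
      left; exists x; rewrite swap_o //; case: (V_next hL hv hj hM (ne0 x xj) xI) => a b.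
      by split.
    * have xj : x != j by apply/eqP => e; move: xI; rewrite e jI.
      have xj' : x != ord_pred j by apply/eqP => e; move: hbx; rewrite e swap_b hj.
      by rewrite swap_o //; split => // i; rewrite (np _ hL hj hb).
Qed.

Definition BoxProp n L (w : word n L) (Q : 'I_n -> 'I_n -> bool) :=
  forall x i, ~~ (w x).1 -> nbb w x i -> Q i (w x).2.

Definition gapc n L (w : word n L) k := #|[set x | ~~ (w x).1 && nbb w x k]|.

Lemma move2 n L (w : word n L) j k l : (1 < n)%N -> (n < L)%N -> valid w ->
  w j = (true, k) -> w (ord_pred j) = (false, l) ->
  exists w', [/\ bwd w j = Some w', valid w', w' (ord_pred j) = (true, k),
    (forall i x, i != k -> (w' x == (true, i)) = (w x == (true, i))) &
    (forall Q, BoxProp w Q -> Q (ordS k) (if l == k then ordS k else l) -> BoxProp w' Q) /\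
    (gapc w' k < gapc w k)%N].
Proof.
move=> hn hnL hv hj hw'.
have hL : (1 < L)%N by lia.
have hb : ~~ (w (ord_pred j)).1 by rewrite hw'.
have [w' [hbwd sk [M [M0 H]]]] := move_core hn hnL hv hj hw'.
have sk' := sk_sym sk.
exists w'; split => //.
- exact: sk_valid sk (valid_swap hL hv hj hb).
- by rewrite -sk ?swap_b ?hj.
- by move=> i x ik; rewrite (sk_eqb _ _ sk') (ws_eqb _ hL hj hb ik).
split.
- move=> Q hQ hQ' x i hx hi; move: (H x hx); case: ifP => _.
    move=> [h1 [[y [hy1 hy2 ->]]| ->]]; rewrite -(nbb_uniq h1 hi) //.
    exact: hQ.
  by move=> [e1 e2]; rewrite e1; apply: hQ; [rewrite -e1 | rewrite -e2].
- rewrite /gapc; apply: proper_card; apply/properP; split.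
    apply/subsetP => x; rewrite !inE => /andP[hx hk]; move: (H x hx); case: ifP => _.
      move=> [h1 _]; have e := nbb_uniq h1 hk.
      by move: (ordS_neq k hn); rewrite e eqxx.
    by move=> [e1 e2]; rewrite -e1 hx -e2.
  exists (ord_pred j); rewrite !inE.
    by rewrite hb /= nbb_box // ord_predK; apply: nbb_bul.
  by rewrite -sk ?swap_b ?hj.
Qed.

Lemma I1_eq n (a b : 'I_n) : n = 1%N -> a = b.
Proof. by move=> e; apply/val_inj; move: (ltn_ord a) (ltn_ord b); rewrite /=; lia. Qed.

Lemma move1 n L (w : word n L) j k : n = 1%N -> (n < L)%N -> valid w ->
  w j = (true, k) -> ~~ (w (ord_pred j)).1 ->
  exists w', [/\ bwd w j = Some w', valid w' & w' (ord_pred j) = (true, k)].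
Proof.
move=> hn hnL hv hj hb.
have hL : (1 < L)%N by lia.
have hw' : w (ord_pred j) = (false, k).
  by move: hb; case: (w (ord_pred j)) => [[] l] // _; rewrite (I1_eq l k hn).
have hM : w j = (true, ordS k) by rewrite hj (I1_eq (ordS k) k hn).
have only : forall x, (w x).1 -> x = j.
  move=> x hx; apply: (pos_uniq hv (bulE hx)); rewrite hj; congr (_, _); exact: I1_eq.
have sk : sameskel (swapw w j (ord_pred j)) (T4res w j).
  move=> x; rewrite (T4E _ hv hj hM).
  case: (eqVneq x (ord_pred j)) => [->|xj']; first by rewrite swap_b hj.
  have -> : (ddf j x <= ddf j j)%N by rewrite !ddfE eqxx; case: ifP => // _; apply: ltnW; apply: cdist_lt.
  rewrite ddf_1.
  have Sxj : (ordS x == j) = false.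
    by apply/negbTE; apply: contra xj' => /eqP <-; rewrite ordSK.
  rewrite Sxj.
  have b1 : ~~ (w (ordS x)).1 by apply/negP => /only /eqP; rewrite Sxj.
  have b2 : ~~ (swapw w j (ord_pred j) x).1.
    case: (eqVneq x j) => [->|xj]; first by rewrite swap_a.
    by rewrite swap_o //; apply/negP => /only /eqP; rewrite (negPf xj).
  by rewrite (negPf b1) (negPf b2).
exists (T4res w j); split.
- by rewrite /bwd hj hw' /= eqxx.
- exact: sk_valid sk (valid_swap hL hv hj hb).
- by rewrite -sk ?swap_b ?hj.
Qed.

Definition step n L (w w' : word n L) := [/\ valid w, valid w' & exists j, bwd w j = Some w'].

Inductive reach n L : word n L -> word n L -> Prop :=
| rr w : reach w w
| rs w1 w2 w3 : step w1 w2 -> reach w2 w3 -> reach w1 w3.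

Lemma reach_trans n L (a b c : word n L) : reach a b -> reach b c -> reach a c.
Proof. by elim=> // w1 w2 w3 s _ IH /IH; apply: rs. Qed.

Lemma gap_pred n L (w : word n L) j k : (1 < L)%N -> valid w -> w j = (true, k) ->
  (0 < gapc w k)%N -> ~~ (w (ord_pred j)).1.
Proof.
move=> hL hv hj; rewrite /gapc card_gt0 => /set0Pn[x]; rewrite inE => /andP[hx /nbbP[y [hy hz]]].
have e := pos_uniq hv hy hj; subst y.
have xj : x != j by apply/eqP => e; move: hx; rewrite e hj.
by apply: hz; rewrite -(cdist_pred xj).
Qed.

Lemma boxE n L (w : word n L) x : ~~ (w x).1 -> w x = (false, (w x).2).
Proof. by case: (w x) => [[] ?]. Qed.

Lemma empty_gap n L (Q : 'I_n -> 'I_n -> bool) (k : 'I_n) : (1 < n)%N -> (n < L)%N ->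
  (forall l, Q k l -> Q (ordS k) (if l == k then ordS k else l)) ->
  forall w : word n L, valid w -> BoxProp w Q ->
  exists w', [/\ reach w w', valid w', BoxProp w' Q, gapc w' k = 0%N &
     forall i x, i != k -> (w' x == (true, i)) = (w x == (true, i))].
Proof.
move=> hn hnL hQ w.
have hL : (1 < L)%N by lia.
move: {2}(gapc w k) (leqnn (gapc w k)) => m; elim: m w => [|m IH] w hm hv hb.
  by exists w; split => //; [apply: rr | lia].
case: (posnP (gapc w k)) => [e|gp]; first by exists w; split => //; apply: rr.
have [j hj] := pos_ex k hv.
have hbj := gap_pred hL hv hj gp.
have hj' : nbb w (ord_pred j) k by rewrite (nbb_box _ hbj) ord_predK; apply: nbb_bul.
have hQk : Q k (w (ord_pred j)).2 := hb _ _ hbj hj'.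
have [w1 [hbwd hv1 _ hsk1 [hb1 hg1]]] := move2 hn hnL hv hj (boxE hbj).
have hB1 := hb1 Q hb (hQ _ hQk).
have [w' [hr hv' hB' hg' hsk']] := IH w1 (ltnSE (leq_trans hg1 hm)) hv1 hB1.
exists w'; split => //.
  by apply: rs hr; split => //; exists j.
by move=> i x ik; rewrite hsk' // hsk1.
Qed.

Lemma gap0 n L (w : word n L) k x : gapc w k = 0%N -> ~~ (w x).1 -> nbb w x k -> False.
Proof. by move=> h hx hn; move: (card0_eq h x); rewrite !inE hx hn. Qed.

Definition Q1 (n k : nat) : 'I_n -> 'I_n -> bool := fun i l => (i == 0 :> nat) || (k <= i)%N.
Definition Q2 (n k : nat) : 'I_n -> 'I_n -> bool := fun i l => (k <= i)%N && (i <= l)%N.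
Arguments Q1 : clear implicits.
Arguments Q2 : clear implicits.

Lemma round1 n L : (1 < n)%N -> (n < L)%N -> forall k, (0 < k <= n)%N ->
  forall w : word n L, valid w -> exists w', [/\ reach w w', valid w' & BoxProp w' (Q1 n k)].
Proof.
move=> hn hnL; elim=> [//|k IH] hk w hv.
case: (posnP k) => [->|k0].
  by exists w; split => //; [apply: rr | move=> x i _ _; rewrite /Q1; lia].
have [w1 [hr1 hv1 hb1]] := IH (ltac:(lia)) w hv.
have kn : (k < n)%N by lia.
pose kk := Ordinal kn.
have hQ : forall l, Q1 n k kk l -> Q1 n k (ordS kk) (if l == kk then ordS kk else l).
  by move=> l _; rewrite /Q1 val_ordS /=; case: ifP => _ //=; rewrite leqnSn orbT.
have [w' [hr' hv' hb' hg' _]] := @empty_gap n L (Q1 n k) kk hn hnL hQ w1 hv1 hb1.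
exists w'; split => //; first exact: reach_trans hr1 hr'.
move=> x i hx hi; have := hb' x i hx hi; rewrite /Q1.
case: (eqVneq i kk) => [e|ik]; first by move: hi; rewrite e => hi; case: (gap0 hg' hx hi).
have : (i != k :> nat) by [].
lia.
Qed.

Lemma round2 n L (last : 'I_n) : (1 < n)%N -> (n < L)%N -> (last == n.-1 :> nat) ->
  forall k, (k <= n.-1)%N ->
  forall w : word n L, valid w -> BoxProp w (Q2 n 0) ->
  exists w', [/\ reach w w', valid w', BoxProp w' (Q2 n k) &
     forall x, (w' x == (true, last)) = (w x == (true, last))].
Proof.
move=> hn hnL hlast; elim=> [|k IH] hk w hv hb.
  by exists w; split => //; apply: rr.
have [w1 [hr1 hv1 hb1 hs1]] := IH (ltac:(lia)) w hv hb.
have kn : (k < n)%N by lia.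
pose kk := Ordinal kn.
have hQ : forall l, Q2 n k kk l -> Q2 n k (ordS kk) (if l == kk then ordS kk else l).
  move=> l; rewrite /Q2.
  have -> : (ordS kk : nat) = k.+1 by rewrite val_ordS /=; case: ifP => // /eqP; lia.
  case: (eqVneq l kk) => [e|lk] /=.
    by rewrite modn_small; lia.
  have lk2 : (l != k :> nat) := lk. lia.
have [w' [hr' hv' hb' hg' hs']] := @empty_gap n L (Q2 n k) kk hn hnL hQ w1 hv1 hb1.
exists w'; split => //; first exact: reach_trans hr1 hr'.
  move=> x i hx hi; have := hb' x i hx hi; rewrite /Q2.
  case: (eqVneq i kk) => [e|ik]; first by move: hi; rewrite e => hi; case: (gap0 hg' hx hi).
  have ik2 : (i != k :> nat) := ik. lia.
move=> x; rewrite hs' ?hs1 //.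
apply/eqP => e; have e2 : (last : nat) = k by rewrite e.
move: hlast; rewrite e2; lia.
Qed.

Definition canon n L (w : word n L) := BoxProp w (Q2 n n.-1).

Lemma canon_box n L (w : word n L) x i : canon w -> ~~ (w x).1 -> nbb w x i ->
  (i == n.-1 :> nat) && ((w x).2 == n.-1 :> nat).
Proof.
move=> hc hx hi; move: (hc x i hx hi); rewrite /Q2.
move: (ltn_ord i) (ltn_ord (w x).2) => a b c; apply/andP; split; apply/eqP; lia.
Qed.

Lemma exists_box n L (w : word n L) : valid w -> (n < L)%N -> exists x, ~~ (w x).1.
Proof.
move=> hv hnL; case: (boolP [exists x, ~~ (w x).1]) => [/existsP //|/existsPn h]; exfalso.
have inj : injective (fun x => (w x).2).
  move=> x y e; apply: (pos_uniq (i := (w x).2) hv).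
    by apply: bulE; move: (h x); rewrite negbK.
  by rewrite e; apply: bulE; move: (h y); rewrite negbK.
by have := @leq_card _ _ _ inj; rewrite !card_ord; lia.
Qed.

Lemma canon_next n L (w : word n L) p lst x : (1 < L)%N -> valid w -> canon w ->
  w p = (true, lst) -> (lst == n.-1 :> nat) -> x != p ->
  w x = (let t := w (ord_pred x) in
         if t.1 then (if ordS t.2 == lst then (false, lst) else (true, ordS t.2))
         else (false, lst)).
Proof.
move=> hL hv hc hp hl xp.
have hpb : (w p).1 by rewrite hp.
have bx : forall i, nbb w x i -> ~~ (w x).1 -> i = lst /\ w x = (false, lst).
  move=> i hi hb; case/andP: (canon_box hc hb hi) => /eqP a /eqP b.
  have e1 : i = lst by apply/val_inj; move/eqP: hl => /= ->.
  have e2 : (w x).2 = lst by apply/val_inj; move/eqP: hl => /= ->.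
  by split => //; rewrite (boxE hb) e2.
have notl : forall i, w x = (true, i) -> i != lst.
  by move=> i hxi; apply/eqP => e; move: xp; rewrite e in hxi; rewrite (pos_uniq hv hxi hp) eqxx.
rewrite /=; case: (boolP (w (ord_pred x)).1) => hx'.
  have hs := valid_succ hL hv (bulE hx'); rewrite ord_predK in hs.
  case: (boolP (w x).1) => hxb.
    have e := nbb_uniq (nbb_bul (bulE hxb)) hs.
    have := notl _ (bulE hxb); rewrite e => /negPf ->.
    by rewrite (bulE hxb) e.
  by case: (bx _ hs hxb) => -> ->; rewrite eqxx.
have [i hi] := nbb_ex x (ex_intro _ p hpb).
case: (boolP (w x).1) => hxb; last by case: (bx _ hi hxb).
exfalso.
have hx'l : nbb w (ord_pred x) lst.
  have [i' hi'] := nbb_ex (ord_pred x) (ex_intro _ p hpb).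
  case/andP: (canon_box hc hx' hi') => /eqP a _.
  have -> : lst = i' by apply/val_inj; move/eqP: hl => /= ->.
  exact: hi'.
rewrite nbb_box // ord_predK in hx'l.
have e := nbb_uniq (nbb_bul (bulE hxb)) hx'l.
by move: (notl _ (bulE hxb)); rewrite e eqxx.
Qed.

Lemma canon_eq n L (w1 w2 : word n L) p (lst : 'I_n) : (1 < L)%N -> valid w1 -> valid w2 ->
  canon w1 -> canon w2 -> (lst == n.-1 :> nat) ->
  w1 p = (true, lst) -> w2 p = (true, lst) -> w1 = w2.
Proof.
move=> hL hv1 hv2 hc1 hc2 hl h1 h2; apply/ffunP => x.
suff: forall d x, cdist p x = d -> w1 x = w2 x by move/(_ _ x erefl).
elim=> [|d IH] y hy.
  by rewrite -(cdist_eq0 hy) h1 h2.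
have yp : y != p by apply/eqP => e; move: hy; rewrite e cdist0.
have py : p != y by rewrite eq_sym.
have hd : cdist p (ord_pred y) = d by have := cdist_pred py; rewrite hy => -[].
rewrite (canon_next hL hv1 hc1 h1 hl yp) (canon_next hL hv2 hc2 h2 hl yp).
by rewrite (IH _ hd).
Qed.

Lemma rotate n L (w : word n L) p (lst : 'I_n) : (0 < n)%N -> (n < L)%N -> valid w -> canon w ->
  w p = (true, lst) -> (lst == n.-1 :> nat) ->
  exists w', [/\ reach w w', valid w', canon w' & w' (ord_pred p) = (true, lst)].
Proof.
move=> hn hnL hv hc hp hl.
have hL : (1 < L)%N by lia.
have hpb : (w p).1 by rewrite hp.
case: (eqVneq n 1%N) => [n1|n1].
  have hb : ~~ (w (ord_pred p)).1.
    apply/negP => hb; have e : w (ord_pred p) = (true, lst).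
      by rewrite (bulE hb) (I1_eq (w (ord_pred p)).2 lst n1).
    by move: (pred_neq p hL); rewrite (pos_uniq hv e hp) eqxx.
  have [w' [hbwd hv' hp']] := move1 n1 hnL hv hp hb.
  exists w'; split => //.
    by apply: rs (rr _); split => //; exists p.
  by move=> x i _ _; rewrite /Q2; move: (ltn_ord i) (ltn_ord (w' x).2); lia.
have hn2 : (1 < n)%N by lia.
have hb : ~~ (w (ord_pred p)).1.
  have [x hx] := exists_box hv hnL.
  have [i hi] := nbb_ex x (ex_intro _ p hpb).
  case/andP: (canon_box hc hx hi) => /eqP a _.
  have e : i = lst by apply/val_inj; move/eqP: hl => /= ->.
  apply: (gap_pred hL hv hp); rewrite /gapc card_gt0; apply/set0Pn; exists x.
  by rewrite inE hx -e hi.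
have hl' : (w (ord_pred p)).2 = lst.
  have [i hi] := nbb_ex (ord_pred p) (ex_intro _ p hpb).
  case/andP: (canon_box hc hb hi) => _ /eqP b.
  by apply/val_inj; move/eqP: hl => /= ->.
have [w1 [hbwd hv1 hp1 hsk1 [hbp _]]] := move2 hn2 hnL hv hp (boxE hb).
have hc0 : BoxProp w (Q2 n 0).
  by move=> x i hx hi; move: (hc x i hx hi); rewrite /Q2 => /andP[_ ->].
have hB1 := hbp (Q2 n 0) hc0 ltac:(by rewrite hl' eqxx /Q2 /= leqnn).
have [w' [hr' hv' hc' hs']] := round2 hn2 hnL hl (leqnn _) hv1 hB1.
exists w'; split => //.
  by apply: rs hr'; split => //; exists p.
by apply/eqP; rewrite hs' hp1.
Qed.

Lemma rot_iter n L (lst : 'I_n) : (0 < n)%N -> (n < L)%N -> (lst == n.-1 :> nat) ->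
  forall t (w : word n L) p q, valid w -> canon w -> w p = (true, lst) -> cdist q p = t ->
  exists w', [/\ reach w w', valid w', canon w' & w' q = (true, lst)].
Proof.
move=> hn hnL hl; elim=> [|t IH] w p q hv hc hp hd.
  by exists w; split => //; [apply: rr | rewrite (cdist_eq0 hd)].
have qp : q != p by apply/eqP => e; move: hd; rewrite e cdist0.
have [w1 [hr1 hv1 hc1 hp1]] := rotate hn hnL hv hc hp hl.
have hd1 : cdist q (ord_pred p) = t by have := cdist_pred qp; rewrite hd => -[].
have [w' [hr' hv' hc' hq']] := IH w1 _ q hv1 hc1 hp1 hd1.
by exists w'; split => //; apply: reach_trans hr1 hr'.
Qed.

Lemma reach_canon n L (w : word n L) : (0 < n)%N -> (n < L)%N -> valid w ->
  exists w', [/\ reach w w', valid w' & canon w'].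
Proof.
move=> hn hnL hv.
case: (eqVneq n 1%N) => [n1|n1].
  exists w; split => //; first exact: rr.
  by move=> x i _ _; rewrite /Q2; move: (ltn_ord i) (ltn_ord (w x).2); lia.
have hn2 : (1 < n)%N by lia.
have [w1 [hr1 hv1 hb1]] := round1 hn2 hnL (k := n) ltac:(lia) hv.
have hb1' : BoxProp w1 (Q2 n 0).
  move=> x i hx hi; move: (hb1 x i hx hi); rewrite /Q1 /Q2 /=.
  move: (ltn_ord i) => ? /orP[/eqP e|]; last lia.
  by rewrite e.
have hlt : (n.-1 < n)%N by lia.
have [w' [hr' hv' hc' _]] := @round2 n L (Ordinal hlt) hn2 hnL (eqxx _) _ (leqnn _) w1 hv1 hb1'.
by exists w'; split => //; apply: reach_trans hr1 hr'.
Qed.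

Theorem reach_z n L : (0 < n)%N -> (n < L)%N -> (exists w0 : word n L, valid w0) ->
  exists z : word n L, valid z /\ forall w, valid w -> reach w z.
Proof.
move=> hn hnL [w0 hv0].
have hL : (1 < L)%N by lia.
have hlt : (n.-1 < n)%N by lia.
pose lst := Ordinal hlt.
have hl : (lst == n.-1 :> nat) by [].
have [z [_ hvz hcz]] := reach_canon hn hnL hv0.
have [pz hpz] := pos_ex lst hvz.
exists z; split => // w hv.
have [c [hr hvc hcc]] := reach_canon hn hnL hv.
have [pc hpc] := pos_ex lst hvc.
have [c' [hr' hvc' hcc' hpc']] := rot_iter hn hnL hl hvc hcc hpc (erefl (cdist pz pc)).
have e := canon_eq hL hvc' hvz hcc' hcz hl hpc' hpz.
by subst c'; apply: reach_trans hr hr'.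
Qed.

Import Order.TTheory GRing.Theory Num.Theory.
Local Open Scope ring_scope.

Lemma rate_ge0 (R : realType) n L (p q : 'I_n -> R) (hp : forall k, 0 < p k) (hq : forall k, 0 < q k)
  (w w' : word n L) : 0 <= rate p q w w'.
Proof.
apply: sumr_ge0 => j _; apply: addr_ge0.
  by case: fwd => [v|//]; apply: mulr_ge0; [apply: ler0n | apply: ltW].
by case: bwd => [v|//]; apply: mulr_ge0; [apply: ler0n | apply: ltW].
Qed.

Lemma rate_pos (R : realType) n L (p q : 'I_n -> R) (hp : forall k, 0 < p k) (hq : forall k, 0 < q k)
  (w w' : word n L) j : bwd w j = Some w' -> 0 < rate p q w w'.
Proof.
move=> hb; rewrite /rate (bigD1 j) //=.
apply: (@lt_le_trans _ _ (q (w j).2)); first exact: hq.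
rewrite -[X in X <= _]addr0 lerD //; last first.
  apply: sumr_ge0 => i _; apply: addr_ge0.
    by case: fwd => [v|//]; apply: mulr_ge0; [apply: ler0n | apply: ltW].
  by case: bwd => [v|//]; apply: mulr_ge0; [apply: ler0n | apply: ltW].
rewrite hb eqxx mul1r -[X in X <= _]add0r lerD //.
by case: fwd => [v|//]; apply: mulr_ge0; [apply: ler0n | apply: ltW].
Qed.

Definition bal (R : realType) n L (p q : 'I_n -> R) (mu : word n L -> R) :=
  forall w', w' \in Omega n L ->
    \sum_(w in Omega n L) mu w * rate p q w w' = mu w' * \sum_(w'' in Omega n L) rate p q w' w''.

Lemma abs_bal (R : realType) n L (p q : 'I_n -> R) (hp : forall k, 0 < p k) (hq : forall k, 0 < q k)
  (mu : word n L -> R) : bal p q mu -> bal p q (fun w => `|mu w|).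
Proof.
move=> hb.
pose out := fun w' : word n L => \sum_(w'' in Omega n L) rate p q w' w''.
have hout : forall w, 0 <= out w by move=> w; apply: sumr_ge0 => *; apply: rate_ge0.
have hle : forall w', w' \in Omega n L ->
    `|mu w'| * out w' <= \sum_(w in Omega n L) `|mu w| * rate p q w w'.
  move=> w' hw'; rewrite -(ger0_norm (hout w')) -normrM -(hb _ hw').
  apply: le_trans (ler_norm_sum _ _ _) _.
  by apply: ler_sum => w _; rewrite normrM (ger0_norm (rate_ge0 hp hq _ _)).
have hsum : \sum_(w' in Omega n L)
    (\sum_(w in Omega n L) `|mu w| * rate p q w w' - `|mu w'| * out w') = 0.
  rewrite sumrB exchange_big /=.
  rewrite (eq_bigr (fun w => `|mu w| * out w)) ?subrr // => w _.
  by rewrite mulr_sumr.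
move=> w' hw'.
have hge : forall u, u \in Omega n L ->
    0 <= \sum_(w in Omega n L) `|mu w| * rate p q w u - `|mu u| * out u.
  by move=> u hu; rewrite subr_ge0; apply: hle.
have h0 := psumr_eq0P hge hsum hw'.
by apply/eqP; rewrite -subr_eq0; apply/eqP.
Qed.

Lemma OmegaE n L (w : word n L) : (w \in Omega n L) = valid w.
Proof. by rewrite inE. Qed.

Lemma pos_prop (R : realType) n L (p q : 'I_n -> R) (hp : forall k, 0 < p k) (hq : forall k, 0 < q k)
  (nu : word n L -> R) (w w' : word n L) :
  (forall u, 0 <= nu u) -> bal p q nu -> step w w' -> 0 < nu w -> 0 < nu w'.
Proof.
move=> hge hb [hv hv' [j hj]] hpos.
have hw : w \in Omega n L by rewrite OmegaE.
have hw' : w' \in Omega n L by rewrite OmegaE.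
have h1 : 0 < \sum_(u in Omega n L) nu u * rate p q u w'.
  rewrite (bigD1 w) //=; apply: (@lt_le_trans _ _ (nu w * rate p q w w' + 0)).
    by rewrite addr0; apply: mulr_gt0 => //; apply: (rate_pos hp hq hj).
  rewrite lerD2l; apply: sumr_ge0 => u _; apply: mulr_ge0 => //; exact: (rate_ge0 hp hq).
rewrite (hb _ hw') in h1.
case: (eqVneq (nu w') 0) => [e|ne]; first by move: h1; rewrite e mul0r ltxx.
by rewrite lt_def ne hge.
Qed.

Lemma reach_pos (R : realType) n L (p q : 'I_n -> R) (hp : forall k, 0 < p k) (hq : forall k, 0 < q k)
  (nu : word n L -> R) (w z : word n L) :
  (forall u, 0 <= nu u) -> bal p q nu -> reach w z -> 0 < nu w -> 0 < nu z.
Proof.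
move=> hge hb; elim=> // w1 w2 w3 hs _ IH h1.
by apply: IH; exact: (pos_prop hp hq hge hb hs h1).
Qed.

Lemma stat_uniq (R : realType) n L (p q : 'I_n -> R) (hp : forall k, 0 < p k)
  (hq : forall k, 0 < q k) (hn : (0 < n)%N) (hnL : (n < L)%N) (pi1 pi2 : word n L -> R) :
  stationary p q pi1 -> stationary p q pi2 -> forall w, pi1 w = pi2 w.
Proof.
case=> h01 hge1 hs1 hb1; case=> h02 hge2 hs2 hb2.
have hex : exists w0 : word n L, valid w0.
  case: (pickP (mem (Omega n L))) => [w0 hw0|h]; first by exists w0; rewrite -OmegaE.
  by move: hs1; rewrite big_pred0 // => /eqP; rewrite eq_sym oner_eq0.
have [z [hvz hz]] := reach_z hn hnL hex.
have hzO : z \in Omega n L by rewrite OmegaE.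
have pz : 0 < pi2 z.
  case: (boolP [exists (w | w \in Omega n L), 0 < pi2 w]).
    case/existsP => w /andP[hw hpw].
    by apply: (reach_pos hp hq hge2 hb2 (hz w _) hpw); rewrite -OmegaE.
  move/existsPn => h; exfalso.
  have hsum0 : \sum_(w in Omega n L) pi2 w = 0.
    apply: big1 => w hw.
    by move: (h w) (hge2 w); rewrite hw /= le_eqVlt => /negPf -> /orP[/eqP <-|].
  by move: hs2; rewrite hsum0 => /eqP; rewrite eq_sym oner_eq0.
pose c := pi1 z / pi2 z.
pose mu := fun w => pi1 w - c * pi2 w.
have hbmu : bal p q mu.
  move=> w' hw'; rewrite /mu.
  rewrite (eq_bigr (fun w => pi1 w * rate p q w w' - c * (pi2 w * rate p q w w'))); last first.
    by move=> w _; rewrite mulrBl mulrA.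
  by rewrite sumrB -mulr_sumr hb1 // hb2 // mulrA -mulrBl.
have muz : mu z = 0 by rewrite /mu /c divfK ?subrr // gt_eqF.
have hab := abs_bal hp hq hbmu.
have mu0 : forall w, w \in Omega n L -> mu w = 0.
  move=> w hw; apply/eqP; rewrite -normr_eq0; apply/eqP.
  case: (eqVneq `|mu w| 0) => // ne; exfalso.
  have hpos : 0 < `|mu w| by rewrite lt_def ne normr_ge0.
  have hwv : valid w by rewrite -OmegaE.
  have := reach_pos hp hq (fun u => normr_ge0 (mu u)) hab (hz w hwv) hpos.
  by rewrite muz normr0 ltxx.
have e1 : forall w, w \in Omega n L -> pi1 w = c * pi2 w.
  by move=> w hw; apply/eqP; rewrite -subr_eq0; apply/eqP; apply: mu0.
have c1 : c = 1.
  have : \sum_(w in Omega n L) pi1 w = c * \sum_(w in Omega n L) pi2 w.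
    by rewrite mulr_sumr; apply: eq_bigr => w hw; apply: e1.
  by rewrite hs1 hs2 mulr1 => <-.
move=> w; case: (boolP (w \in Omega n L)) => hw.
  by rewrite e1 // c1 mul1r.
by rewrite h01 // h02.
Qed.

Local Close Scope ring_scope.

Definition psi n L (w : word n L) : word n L := [ffun x => ((w x).1, ordS (w x).2)].
Definition phi n L (w : word n L) : word n L := [ffun x => ((w x).1, ord_pred (w x).2)].

Lemma psiK n L : cancel (@psi n L) (@phi n L).
Proof. by move=> w; apply/ffunP => x; rewrite !ffunE /= ordSK; case: (w x). Qed.
Lemma phiK n L : cancel (@phi n L) (@psi n L).
Proof. by move=> w; apply/ffunP => x; rewrite !ffunE /= ord_predK; case: (w x). Qed.
Lemma psi_inj n L : injective (@psi n L).
Proof. exact: can_inj (@psiK n L). Qed.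

Lemma psi_eqb n L (w : word n L) m t : (psi w m == (true, t)) = (w m == (true, ord_pred t)).
Proof.
rewrite ffunE; case: (w m) => b a /=; rewrite !xpair_eqE; congr (_ && _).
by apply/eqP/eqP => [<-|->]; rewrite ?ordSK ?ord_predK.
Qed.

Lemma psi_swap n L (w : word n L) a b : swapw (psi w) a b = psi (swapw w a b).
Proof. by apply/ffunP => x; rewrite !ffunE; case: ifP => _; [|case: ifP => _]; rewrite ?ffunE. Qed.

Lemma psi_T2 n L (w : word n L) j : T2res (psi w) j = psi (T2res w j).
Proof.
apply/ffunP => x; rewrite /T2res !ffunE /=.
have -> : [pick m | psi w m == (true, ord_pred (ordS (w j).2))] =
          [pick m | w m == (true, ord_pred (w j).2)].
  by apply: eq_pick => m /=; rewrite psi_eqb ordSK.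
by case: ifP => _ //; case: ifP => _ //; case: ifP => _ //; rewrite ?ffunE //= ord_predK ordSK.
Qed.

Lemma psi_T4 n L (w : word n L) j : T4res (psi w) j = psi (T4res w j).
Proof.
apply/ffunP => x; rewrite /T4res !ffunE /=.
have -> : [pick m | psi w m == (true, ordS (ordS (w j).2))] =
          [pick m | w m == (true, ordS (w j).2)].
  by apply: eq_pick => m /=; rewrite psi_eqb ordSK.
by case: ifP => _ //; case: ifP => _ //; case: ifP => _ //; rewrite ?ffunE.
Qed.

Lemma psi_fwd n L (w : word n L) j : fwd (psi w) j = omap (@psi n L) (fwd w j).
Proof.
rewrite /fwd !ffunE /=; case: ((w j).1) => //; case: ((w (ordS j)).1) => //=.
by rewrite (inj_eq (@ordS_inj n)); case: ifP => _; rewrite ?psi_T2 ?psi_swap.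
Qed.

Lemma psi_bwd n L (w : word n L) j : bwd (psi w) j = omap (@psi n L) (bwd w j).
Proof.
rewrite /bwd !ffunE /=; case: ((w j).1) => //; case: ((w (ord_pred j)).1) => //=.
by rewrite (inj_eq (@ordS_inj n)); case: ifP => _; rewrite ?psi_T4 ?psi_swap.
Qed.

Lemma valid_psi n L (w : word n L) : valid (psi w) = valid w.
Proof.
rewrite /valid; congr (_ && _).
  apply/forallP/forallP => h k.
    have := h (ordS k); rewrite (_ : [set j | psi w j == (true, ordS k)] = [set j | w j == (true, k)]) //.
    by apply/setP => j; rewrite !inE psi_eqb ordSK.
  rewrite (_ : [set j | psi w j == (true, k)] = [set j | w j == (true, ord_pred k)]) //.
  by apply/setP => j; rewrite !inE psi_eqb.
apply: eq_forallb => j; apply: eq_forallb => j2; rewrite !ffunE /=.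
rewrite (inj_eq (@ordS_inj n)); congr ((_ && _) ==> _).
congr (_ && _); congr (_ && _); apply: eq_forallb => x; by rewrite ffunE.
Qed.


Local Open Scope ring_scope.

Lemma rate_psi (R : realType) n L (p q : 'I_n -> R) (v v' : word n L) :
  rate p q (psi v) (psi v') = rate (fun j => p (ordS j)) (fun j => q (ordS j)) v v'.
Proof.
apply: eq_bigr => j _; rewrite psi_fwd psi_bwd.
by case: fwd => [u|]; case: bwd => [u'|] //=; rewrite ?(inj_eq (@psi_inj n L)) ffunE.
Qed.

Lemma sum_psi (R : realType) n L (F : word n L -> R) :
  \sum_(v in Omega n L) F (psi v) = \sum_(w in Omega n L) F w.
Proof.
rewrite [RHS](reindex (@psi n L)) /=; last by apply: onW_bij; exists (@phi n L); [apply: psiK|apply: phiK].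
by apply: eq_bigl => v; rewrite !OmegaE valid_psi.
Qed.

Lemma stat_psi (R : realType) n L (p q : 'I_n -> R) (pi : word n L -> R) :
  stationary p q pi ->
  stationary (fun j => p (ordS j)) (fun j => q (ordS j)) (fun v => pi (psi v)).
Proof.
case=> h0 hge hs hb; split => //.
- by move=> w hw; apply: h0; rewrite OmegaE valid_psi -OmegaE.
- by rewrite (sum_psi (fun w => pi w)).
- move=> v' hv'.
  have hv'' : psi v' \in Omega n L by rewrite OmegaE valid_psi -OmegaE.
  rewrite (eq_bigr (fun v => pi (psi v) * rate p q (psi v) (psi v'))); last by move=> v _; rewrite rate_psi.
  rewrite (sum_psi (fun w => pi w * rate p q w (psi v'))) hb //.
  congr (_ * _); rewrite -(sum_psi (fun w => rate p q (psi v') w)).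
  by apply: eq_bigr => v _; rewrite rate_psi.
Qed.

Unset Implicit Arguments.
Unset Strict Implicit.

Theorem proposition6p2 (R : realType) (n L : nat)
    (hn : (1 <= n)%N) (hnL : (n < L)%N)
    (p q : 'I_n -> R) (hp : forall k, 0 < p k) (hq : forall k, 0 < q k)
    (pi pi' : word n L -> R) (c1 : 'I_L) (hc1 : nat_of_ord c1 = 0%N) (i : 'I_n) :
  stationary p q pi ->
  stationary (fun j => p (ordS j)) (fun j => q (ordS j)) pi' ->
  density pi' c1 i = density pi c1 (ordS i).
Proof.
move=> hs hs'.
have hs'' := stat_psi hs.
have e : forall v, pi' v = pi (psi v).
  by apply: (stat_uniq (p := fun j => p (ordS j)) (q := fun j => q (ordS j))) => //.
rewrite /density (eq_bigr (fun v => pi (psi v) * (v c1 == (false, i))%:R)); last by move=> v _; rewrite e.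
rewrite -(sum_psi (fun w => pi w * (w c1 == (false, ordS i))%:R)).
apply: eq_bigr => v _; congr (_ * _%:R).
by rewrite ffunE xpair_eqE /= (inj_eq (@ordS_inj n)) -xpair_eqE; case: (v c1).
Qed.
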